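(* Let $\mathbb{F}_q$ be a finite field, $\mathcal{C}\subseteq\mathbb{F}_q^n$ a linear $[n,k]$ code with dual code $\mathcal{C}^\perp$, and $\mathbb{P}$ a poset on $[n]=\{1,\dots,n\}$ with dual poset $\widetilde{\mathbb{P}}$. For $1\le r\le k$, $$d_r^{\mathbb{P}}(\mathcal{C})=\min\{|\langle J\rangle_{\mathbb{P}}| : J\subseteq[n],\ |J|-\rho^\perp(J)\ge r\}=\min\{|\langle J\rangle_{\mathbb{P}}| : J\subseteq[n],\ |J|-\rho^\perp(J)= r\}.$$ For $1\le s\le n-k$, $$d_s^{\widetilde{\mathbb{P}}}(\mathcal{C}^\perp)=\min\{|\langle J\rangle_{\widetilde{\mathbb{P}}}| : J\subseteq[n],\ |J|-\rho(J)\ge s\}=\min\{|\langle J\rangle_{\widetilde{\mathbb{P}}}| : J\subseteq[n],\ |J|-\rho(J)= s\}.$$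
   Context: The dual poset $\widetilde{\mathbb{P}}$ has $i\le_{\widetilde{\mathbb{P}}}j$ iff $j\le_{\mathbb{P}}i$. For $J\subseteq[n]$, $\langle J\rangle_{\mathbb{P}}=\{i:i\le_{\mathbb{P}}j\text{ for some }j\in J\}$ (the smallest ideal of $\mathbb{P}$ containing $J$), and similarly for $\widetilde{\mathbb{P}}$. For $u\in\mathbb{F}_q^n$, $\mathrm{supp}(u)=\{i:u_i\ne0\}$; for $D\subseteq\mathbb{F}_q^n$, $\mathrm{supp}(D)=\bigcup_{u\in D}\mathrm{supp}(u)$ and $w_{\mathbb{P}}(D)=|\langle\mathrm{supp}(D)\rangle_{\mathbb{P}}|$. The $r$-th generalized minimum $\mathbb{P}$-weight is $d_r^{\mathbb{P}}(\mathcal{C})=\min\{w_{\mathbb{P}}(D): D \text{ an } r\text{-dimensional subspace of }\mathcal{C}\}$, and $d_s^{\widetilde{\mathbb{P}}}(\mathcal{C}^\perp)=\min\{w_{\widetilde{\mathbb{P}}}(D): D \text{ an } s\text{-dimensional subspace of }\mathcal{C}^\perp\}$. For $A\subseteq[n]$, $\mathcal{C}|A=\{(u_i)_{i\in A}:u\in\mathcal{C}\}$; $\rho(A)=\dim(\mathcal{C}|A)$ and $\rho^\perp(A)=\dim(\mathcal{C}^\perp|A)$ are the rank and corank functions of the matroid of $\mathcal{C}$. *)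

(* Defs.v *)
From mathcomp Require Import all_boot all_order all_algebra.
Set Implicit Arguments. Unset Strict Implicit. Unset Printing Implicit Defensive.
Import GRing.Theory.
Local Open Scope ring_scope.

(* A partial order on [n] = 'I_n (0-indexed coordinates). *)
Definition is_poset (n : nat) (le : rel 'I_n) : Prop :=
  [/\ reflexive le, antisymmetric le & transitive le].

Definition dual_rel (n : nat) (le : rel 'I_n) : rel 'I_n := fun i j => le j i.

Definition ideal (n : nat) (le : rel 'I_n) (J : {set 'I_n}) : {set 'I_n} :=
  [set i | [exists j in J, le i j]].

(* A linear code is the row space of a matrix (%MS).  supp(D) of a subspace D. *)
Definition supp (F : finFieldType) (n p : nat) (D : 'M[F]_(p, n)) : {set 'I_n} :=
  [set i | [exists u : 'rV[F]_n, (u <= D)%MS && (u 0 i != 0)]].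

Definition wP (F : finFieldType) (n p : nat) (le : rel 'I_n) (D : 'M[F]_(p, n)) : nat :=
  #|ideal le (supp D)|.

(* r-th generalized minimum P-weight of the code with row space C:
   minimum of w_P(D) over r-dimensional subspaces D of C (every such subspace
   is the row space of some n x n matrix).  The default n.+1 is only reached
   when there is no such subspace. *)
Definition dP (F : finFieldType) (n p : nat) (le : rel 'I_n) (C : 'M[F]_(p, n)) (r : nat) : nat :=
  \big[minn/n.+1]_(D : 'M[F]_n | (D <= C)%MS && (\rank D == r)) wP le D.

Definition restr (F : finFieldType) (n p : nat) (C : 'M[F]_(p, n)) (A : {set 'I_n})
  : 'M[F]_(p, #|A|) := colsub (@enum_val _ (mem A)) C.

Definition rho (F : finFieldType) (n p : nat) (C : 'M[F]_(p, n)) (A : {set 'I_n}) : nat :=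
  \rank (restr C A).

Definition dual_code (F : finFieldType) (n m : nat) (G : 'M[F]_(m, n)) : 'M[F]_n :=
  kermx G^T.

(* Main.v *)
Require Import Defs.
From mathcomp Require Import all_boot all_order all_algebra.
From mathcomp Require Import zify.
Set Implicit Arguments. Unset Strict Implicit. Unset Printing Implicit Defensive.
Import GRing.Theory.

Section Aux.
Variables (F : finFieldType) (n : nat).
Local Open Scope ring_scope.

Definition Pm (J : {set 'I_n}) : 'M[F]_(n, #|J|) := colsub (@enum_val _ (mem J)) 1%:M.
Definition Sm (J : {set 'I_n}) : 'M[F]_(#|J|, n) := (Pm J)^T.

Lemma restrE p (C : 'M[F]_(p, n)) J : restr C J = C *m Pm J.
Proof. by rewrite /restr /Pm mulmx_colsub mulmx1. Qed.

Lemma SmE J j l : Sm J j l = (l == @enum_val _ (mem J) j)%:R.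
Proof. by rewrite /Sm /Pm !mxE. Qed.

Lemma SmPm J : Sm J *m Pm J = 1%:M.
Proof.
rewrite /Pm mulmx_colsub mulmx1; apply/matrixP => i j.
rewrite !mxE (inj_eq enum_val_inj) eq_sym //.
Qed.

Lemma Sm_free J : row_free (Sm J).
Proof.
rewrite /row_free eqn_leq rank_leq_row /=.
have := mxrankM_maxl (Sm J) (Pm J); by rewrite SmPm mxrank1.
Qed.

Lemma SmZ (J : {set 'I_n}) k (Y : 'M[F]_(k, #|J|)) i l : l \notin J -> (Y *m Sm J) i l = 0.
Proof.
move=> lJ; rewrite mxE big1 // => j _; rewrite SmE.
case: eqP => [e|]; last by rewrite mulr0.
by move: lJ; rewrite e; have := enum_valP j => /= ->.
Qed.

Lemma projK (J : {set 'I_n}) k (X : 'M[F]_(k, n)) :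
  (forall i l, l \notin J -> X i l = 0) -> X *m Pm J *m Sm J = X.
Proof.
move=> HX; rewrite /Pm mulmx_colsub mulmx1; apply/matrixP => i l.
rewrite mxE; case: (boolP (l \in J)) => lJ; last first.
  rewrite HX // big1 // => j _; rewrite SmE mxE.
  case: eqP => [e|]; last by rewrite mulr0.
  by move: lJ; rewrite e; have := enum_valP j => /= ->.
have lJ' : l \in mem J by [].
rewrite (bigD1 (enum_rank_in lJ' l)) //= big1 => [|j nj].
  by rewrite SmE mxE enum_rankK_in // eqxx mulr1 addr0.
rewrite SmE; case: eqP => [e|]; last by rewrite mulr0.
by case/eqP: nj; apply: enum_val_inj; rewrite enum_rankK_in // -e.
Qed.

Lemma supp_sub k (D : 'M[F]_(k, n)) (J : {set 'I_n}) : (supp D \subset J) = (D <= Sm J)%MS.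
Proof.
apply/idP/idP => H.
  apply/row_subP => i; rewrite -(projK (X := row i D) (J := J)) ?submxMl //.
  move=> i0 l lJ; rewrite mxE; apply/eqP; apply: contraNT lJ => nz.
  apply: (subsetP H); rewrite inE; apply/existsP; exists (row i D).
  by rewrite row_sub mxE nz.
apply/subsetP => l; rewrite inE => /existsP [u /andP [uD ul]].
apply: contraR ul => lJ.
have uS := submx_trans uD H.
by rewrite -(mulmxKpV uS) SmZ.
Qed.

Lemma dimJ p q (A : 'M[F]_(p, n)) (B : 'M[F]_(q, n))
  (hA : forall k (X : 'M[F]_(k, n)), (X <= A)%MS = (X *m B^T == 0)) (J : {set 'I_n}) :
  \rank (A :&: Sm J)%MS = (#|J| - \rank (B *m Pm J))%N.
Proof.
set K := kermx (B *m Pm J)^T.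
have -> : (#|J| - \rank (B *m Pm J))%N = \rank (K *m Sm J).
  by rewrite mxrankMfree ?Sm_free // mxrank_ker mxrank_tr.
apply/eqP; rewrite eqn_leq !mxrankS //; last first.
  rewrite -{1}(mulmxKpV (capmxSr A (Sm J))); apply: submxMr.
  rewrite /K; apply/sub_kermxP; rewrite trmx_mul -/(Sm J) mulmxA -(mulmxA _ _ (Sm J)).
  rewrite mulmxA.   rewrite (mulmxKpV (capmxSr A (Sm J))); apply/eqP; rewrite -hA; exact: capmxSl.
rewrite sub_capmx submxMl andbT hA -mulmxA.
have -> : Sm J *m B^T = (B *m Pm J)^T by rewrite trmx_mul.
by rewrite mulmx_ker.
Qed.

Lemma rho_mono q (B : 'M[F]_(q, n)) (J1 J2 : {set 'I_n}) :
  J1 \subset J2 -> (rho B J1 <= rho B J2)%N.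
Proof.
move=> sJ; rewrite /rho !restrE.
have -> : Pm J1 = Pm J2 *m (Sm J2 *m Pm J1).
  rewrite mulmxA; apply: trmx_inj; rewrite !trmx_mul trmxK -/(Sm J1) -/(Sm J2).
  rewrite mulmxA projK // => i l lJ; rewrite SmE.
  case: eqP => // e; move: lJ; rewrite e.
  by have := enum_valP i => /= /(subsetP sJ) ->.
by rewrite mulmxA mxrankM_maxl.
Qed.

End Aux.
Arguments Pm {F n} J.
Arguments Sm {F n} J.

Lemma ideal_sub n (le : rel 'I_n) (J1 J2 : {set 'I_n}) :
  J1 \subset J2 -> ideal le J1 \subset ideal le J2.
Proof.
move=> sJ; apply/subsetP => i; rewrite !inE => /existsP [j /andP [jJ lij]].
by apply/existsP; exists j; rewrite (subsetP sJ) .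
Qed.

Lemma bigmin_le (I1 I2 : finType) (P1 : pred I1) (P2 : pred I2)
  (f1 : I1 -> nat) (f2 : I2 -> nat) x :
  (forall i, P1 i -> exists2 j, P2 j & (f2 j <= f1 i)%N) ->
  (\big[minn/x]_(j | P2 j) f2 j <= \big[minn/x]_(i | P1 i) f1 i)%N.
Proof.
move=> H; apply: (big_ind (fun v => \big[minn/x]_(j | P2 j) f2 j <= v)%N).
- by elim/big_rec: _ => // i v _ hv; rewrite geq_min hv orbT.
- by move=> a b ha hb; rewrite leq_min ha hb.
move=> i /H [j Pj le]; apply: leq_trans le.
rewrite unlock; elim: (index_enum I2) (mem_index_enum j) => //= a r IH.
rewrite inE => /predU1P [<-|jr]; first by rewrite Pj geq_minl.
by case: (P2 a) => /=; [apply: leq_trans (geq_minr _ _) (IH jr)| exact: IH].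
Qed.

Section Main.
Variables (F : finFieldType) (n : nat).
Local Open Scope ring_scope.

Lemma exact_sub q (B : 'M[F]_(q, n)) r (J : {set 'I_n}) :
  (r <= #|J| - rho B J)%N -> exists2 J' : {set 'I_n}, J' \subset J & (#|J'| - rho B J' == r)%N.
Proof.
have [N] := ubnP #|J|; elim: N J => // N IH J cardJ H.
case: (eqVneq (#|J| - rho B J)%N r) => [e|ne]; first by exists J; rewrite ?subxx ?e.
have lt : (r < #|J| - rho B J)%N by rewrite ltn_neqAle eq_sym ne H.
case: (set_0Vmem J) => [J0|[x xJ]]; first by move: lt; rewrite J0 cards0.
have c := cardsD1 x J; rewrite xJ in c.
have hm := rho_mono B (subsetDl J [set x]).
have [J' sJ' e] := IH (J :\ x) ltac:(lia) ltac:(lia).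
by exists J' => //; apply: subset_trans sJ' (subsetDl J [set x]).
Qed.

Lemma mainL p q (A : 'M[F]_(p, n)) (B : 'M[F]_(q, n))
  (hA : forall k (X : 'M[F]_(k, n)), (X <= A)%MS = (X *m B^T == 0))
  (le : rel 'I_n) r :
  dP le A r = \big[minn/n.+1]_(J : {set 'I_n} | (r <= #|J| - rho B J)%N) #|ideal le J|
  /\ dP le A r = \big[minn/n.+1]_(J : {set 'I_n} | (#|J| - rho B J == r)%N) #|ideal le J|.
Proof.
have dimE J : \rank (A :&: Sm J)%MS = (#|J| - rho B J)%N by rewrite (dimJ hA) /rho restrE.
have E1 : dP le A r = \big[minn/n.+1]_(J : {set 'I_n} | (r <= #|J| - rho B J)%N) #|ideal le J|.
  apply/eqP; rewrite eqn_leq; apply/andP; split; apply: bigmin_le.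
    move=> J HJ.
    have hr : (r <= \rank (A :&: Sm J)%MS)%N by rewrite dimE.
    have hn : (\rank (A :&: Sm J)%MS <= n)%N by exact: rank_leq_col.
    exists (pid_mx r *m row_base (A :&: Sm J)%MS : 'M[F]_n).
      apply/andP; split.
        by apply: submx_trans (submxMl _ _) _; rewrite eq_row_base capmxSl.
      rewrite mxrankMfree ?row_base_free // rank_pid_mx //; exact: leq_trans hr hn.
    apply: subset_leq_card; apply: ideal_sub; rewrite supp_sub.
    by apply: submx_trans (submxMl _ _) _; rewrite eq_row_base capmxSr.
  move=> D /andP [DA /eqP rD]; exists (supp D) => //.
  rewrite -dimE -rD mxrankS // sub_capmx DA -supp_sub; exact: subxx.
split => //; rewrite E1; apply/eqP; rewrite eqn_leq; apply/andP; split; apply: bigmin_le.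
  by move=> J /eqP e; exists J => //; rewrite e.
move=> J HJ; have [J' sJ' e] := exact_sub HJ.
by exists J' => //; apply: subset_leq_card; apply: ideal_sub.
Qed.

Lemma dorth m (G : 'M[F]_(m, n)) k (X : 'M[F]_(k, n)) :
  (X <= G)%MS = (X *m (kermx G^T)^T == 0).
Proof.
set L := kermx (kermx G^T)^T.
have GL : (G <= L)%MS.
  apply/sub_kermxP; have := congr1 trmx (mulmx_ker G^T).
  by rewrite trmx_mul trmxK trmx0.
have LG : (L <= G)%MS.
  rewrite -(mxrank_leqif_sup GL).2 /L mxrank_ker mxrank_tr mxrank_ker mxrank_tr.
  by rewrite subKn ?rank_leq_col.
apply/idP/idP => H.
  by apply/eqP/sub_kermxP; apply: submx_trans H GL.
by apply: submx_trans LG; apply/sub_kermxP/eqP.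
Qed.

End Main.

Unset Implicit Arguments.
Theorem theorem2 (F : finFieldType) (n m k : nat) (G : 'M[F]_(m, n))
  (le : rel 'I_n) :
  is_poset le -> \rank G = k ->
  (forall r : nat, (1 <= r <= k)%N ->
     dP le G r = \big[minn/n.+1]_(J : {set 'I_n} | (r <= #|J| - rho (dual_code G) J)%N)
                    #|ideal le J|
  /\ dP le G r = \big[minn/n.+1]_(J : {set 'I_n} | (#|J| - rho (dual_code G) J == r)%N)
                    #|ideal le J|)
  /\
  (forall s : nat, (1 <= s <= n - k)%N ->
     dP (dual_rel le) (dual_code G) s
       = \big[minn/n.+1]_(J : {set 'I_n} | (s <= #|J| - rho G J)%N) #|ideal (dual_rel le) J|
  /\ dP (dual_rel le) (dual_code G) s
       = \big[minn/n.+1]_(J : {set 'I_n} | (#|J| - rho G J == s)%N) #|ideal (dual_rel le) J|).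
Proof.
move=> _ _; split => r _; apply: mainL => k0 X.
  exact: dorth.
by apply/sub_kermxP/eqP.
Qed.
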